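(* Let $n$ be a positive integer and let $\varphi(n)$ denote the minimum of all sums $r_1+s_1+s_2+\dots+s_t$, taken over all $t\in\mathbb N$ and all positive integers $r_1,\dots,r_t,s_1,\dots,s_t$ such that $n=\sum_{i=1}^t r_is_i$ and $r_1>r_2>\dots>r_t$ (the last condition being vacuous for $t=1$). Then: (i) there is a uniquely determined positive integer $k$ such that $k^2-k+1\le n\le k^2+k$; (ii) if $n\le k^2$ then $\varphi(n)=2k$; (iii) if $k^2+1\le n$ then $\varphi(n)=2k+1$.
   Context: $\mathbb N$ denotes the set of positive integers. No ordering condition is imposed on the $s_i$. *)

(* Defs.v *)
From mathcomp Require Import all_boot.
Set Implicit Arguments. Unset Strict Implicit. Unset Printing Implicit Defensive.

Definition is_rep (n : nat) (r s : seq nat) : Prop :=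
  0 < size r /\ size r = size s /\
  all (fun x => 0 < x) r /\ all (fun x => 0 < x) s /\
  sorted (fun a b => b < a) r /\
  n = sumn [seq p.1 * p.2 | p <- zip r s].

Definition rep_cost (r s : seq nat) : nat := head 0 r + sumn s.

Definition achievable (n m : nat) : Prop :=
  exists r s, is_rep n r s /\ rep_cost r s = m.

Definition phi_is (n m : nat) : Prop :=
  achievable n m /\ forall m', achievable n m' -> m <= m'.

(* Main.v *)
Require Import Defs.
From mathcomp Require Import all_boot.
From mathcomp Require Import zify.

Lemma sum_le (m : nat) (r s : seq nat) :
  all (fun x => x <= m) r -> sumn [seq p.1 * p.2 | p <- zip r s] <= m * sumn s.
Proof.
elim: r s => [|x r IH] [|y s] //=.
move=> /andP[hx hr]; have := IH s hr; rewrite mulnDr.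
move=> h; apply: leq_add => //; exact: leq_mul.
Qed.

Lemma rep_bound (n : nat) (r s : seq nat) : is_rep n r s -> n <= head 0 r * sumn s.
Proof.
move=> [hs [_ [_ [_ [hsort ->]]]]].
apply: sum_le.
case: r hs hsort => [|x r] //= _ hp.
rewrite leqnn /=.
have := @order_path_min _ (fun a b => b < a) x r (fun a b c h1 h2 => ltn_trans h2 h1) hp.
move/allP=> H; apply/allP => y /H; exact: ltnW.
Qed.

Lemma lower n C k : achievable n C -> k ^ 2 - k + 1 <= n -> 0 < k -> 2 * k <= C.
Proof.
move=> [r [s [hr <-]]] hn hk; have := @rep_bound _ _ _ hr.
rewrite /rep_cost; set a := head 0 r; set b := sumn s => h.
rewrite leqNgt; apply/negP => hc.
have : 4 * (a * b) <= (a + b) ^ 2.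
  have : 0 <= (a - b) * (a - b) by [].
  case: (leqP a b) => hab; nia.
nia.
Qed.

Lemma lower2 n C k : achievable n C -> k ^ 2 + 1 <= n -> 0 < k -> 2 * k + 1 <= C.
Proof.
move=> [r [s [hr <-]]] hn hk; have := @rep_bound _ _ _ hr.
rewrite /rep_cost; set a := head 0 r; set b := sumn s => h.
rewrite leqNgt; apply/negP => hc.
have : 4 * (a * b) <= (a + b) ^ 2.
  case: (leqP a b) => hab; nia.
nia.
Qed.

Lemma constr k S b : 0 < k -> 1 <= b <= k -> 2 <= S + (b == k) ->
  achievable (k * (S - 1) + b) (k + S).
Proof.
move=> hk /andP[hb1 hbk] hS.
case: (eqVneq b k) hS => [eb|hne] hS; [subst b|].
- exists [:: k], [:: S]; split; last by rewrite /rep_cost /= addn0.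
  rewrite /= in hS.
  split=> //; split=> //; split; first by rewrite /= hk.
  split; first by rewrite /= ?andbT; lia.
  split=> //=; nia.
- rewrite /= in hS.
  exists [:: k; b], [:: S - 1; 1]; split; last by rewrite /rep_cost /=; lia.
  split=> //; split=> //; split; first by rewrite /= hk hb1.
  split; first by rewrite /=; apply/andP; split => //; lia.
  split; first by rewrite /= ?andbT; lia.
  rewrite /=; nia.
Qed.

Theorem theorem8p1 (n : nat) (hn : 0 < n) :
  (exists! k : nat, 0 < k /\ (k ^ 2 - k + 1 <= n <= k ^ 2 + k)) /\
  (forall k : nat, 0 < k -> k ^ 2 - k + 1 <= n <= k ^ 2 + k ->
     (n <= k ^ 2 -> phi_is n (2 * k)) /\
     (k ^ 2 + 1 <= n -> phi_is n (2 * k + 1))).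
Proof.
split.
  have ex : exists k, n <= k ^ 2 + k by exists n; nia.
  pose k := ex_minn ex.
  have hk : n <= k ^ 2 + k by rewrite /k; case: ex_minnP.
  have hmin : forall j, n <= j ^ 2 + j -> k <= j by rewrite /k; case: ex_minnP.
  have k0 : 0 < k by move: hk; case: (k) => //=; lia.
  have hlo : k ^ 2 - k + 1 <= n.
    rewrite leqNgt; apply/negP => hc.
    have := hmin (k - 1) ltac:(nia). lia.
  exists k; split; first by split => //; apply/andP.
  move=> j [hj /andP[h1 h2]].
  have := hmin j h2 => hkj.
  apply/eqP; rewrite eqn_leq hkj /=.
  rewrite leqNgt; apply/negP => hc; nia.
move=> k hk /andP[h1 h2]; split => h3.
- split; last by move=> m hm; exact: lower hm h1 hk.
  have e : n = k * (k - 1) + (n - k * (k - 1)) by nia.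
  rewrite e (_ : 2 * k = k + k); last by lia.
  apply: constr => //; first (apply/andP; split; nia).
  case: (leqP 2 k) => hk2; first lia.
  have k1 : k = 1 by lia.
  subst k; have -> : n = 1 by nia.
  done.
- split; last by move=> m hm; exact: lower2 hm h3 hk.
  have e : n = k * (k + 1 - 1) + (n - k * k) by nia.
  rewrite e (_ : 2 * k + 1 = k + (k + 1)); last by lia.
  apply: constr => //; first (apply/andP; split; nia).
  lia.
Qed.
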